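(* Let $s,r,R$ be positive integers and $\delta=(r+1)(R+1)-sr-1$. If $\delta\le 0$, then the ball $B(R)\subseteq\mathbb F_q^{s\times r}$ is $R$-closed with respect to the NRT metric; equivalently, for every $x\in\mathbb F_q^{s\times r}$ with $w(x)\ge R+1$ there is $c\in\mathbb F_q^{s\times r}$ with $d(c,x)\le R$ and $B(c,R)\cap B(R)=\emptyset$.
   Context: $q$ is a prime power, $\mathbb F_q^{s\times r}$ the set of $s\times r$ matrices over $\mathbb F_q$ with rows in $\mathbb F_q^{1\times r}$. For a row $y=(y_1,\dots,y_r)$, the NRT weight is $w(y)=\max\{j: y_j\neq 0\}$ if $y\neq0$ and $w(0)=0$; for a matrix, $w(x)=\sum_i w(x_i)$. The NRT metric is $d(x,y)=w(x-y)$; $B(c,R)=\{x: d(x,c)\le R\}$, $B(R)=B(0,R)$. A set is $R$-closed if its complement is a union of balls of radius $R$. *)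

(* Defs.v *)
From mathcomp Require Import all_boot all_order all_algebra.
Set Implicit Arguments. Unset Strict Implicit. Unset Printing Implicit Defensive.
Import GRing.Theory.
Local Open Scope ring_scope.

Section NRT.
Variables (F : finFieldType) (s r : nat).

(* NRT weight of a row y = (y_1,...,y_r): the largest (1-based) index j
   with y_j != 0, and 0 if y = 0. Column j : 'I_r has 1-based index j.+1. *)
Definition nrt_row_weight (y : 'rV[F]_r) : nat :=
  \max_(j < r | y 0 j != 0) j.+1.

Definition nrt_weight (x : 'M[F]_(s, r)) : nat :=
  \sum_(i < s) nrt_row_weight (row i x).

Definition nrt_dist (x y : 'M[F]_(s, r)) : nat := nrt_weight (x - y).

Definition nrt_ball (c : 'M[F]_(s, r)) (R : nat) : {set 'M[F]_(s, r)} :=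
  [set x | (nrt_dist x c <= R)%N].

Definition R_closed (R : nat) (A : {set 'M[F]_(s, r)}) : Prop :=
  exists C : {set 'M[F]_(s, r)}, ~: A = \bigcup_(c in C) nrt_ball c R.

End NRT.

(* Main.v *)
Require Import Defs.
From mathcomp Require Import all_boot all_order all_algebra.
From mathcomp Require Import zify.
Import GRing.Theory.
Set Implicit Arguments. Unset Strict Implicit. Unset Printing Implicit Defensive.

Section Aux.
Import GRing.Theory.

Lemma ex_subset (T : finType) (A : {set T}) n :
  n <= #|A| -> exists B : {set T}, B \subset A /\ #|B| = n.
Proof.
elim: n => [|n IH] hn; first by exists set0; rewrite sub0set cards0.
have [B [sBA cB]] := IH (ltnW hn).
have : ~~ (A \subset B).
  apply/negP => sAB; move: (subset_leq_card sAB); rewrite cB; lia.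
case/subsetPn => x xA xB.
exists (x |: B); split.
  by rewrite subUset sub1set xA sBA.
by rewrite cardsU1 xB cB.
Qed.

Lemma distribute s r (M : {set 'I_s}) B :
  B <= #|M| * r -> exists t : 'I_s -> nat,
    [/\ forall i, t i <= r, forall i, i \notin M -> t i = 0 & \sum_i t i = B].
Proof.
elim: B => [|B IH] hB.
  by exists (fun _ => 0); split => //; rewrite big1.
have [t [tr tM ts]] := IH (ltnW hB).
have : exists2 i, i \in M & t i < r.
  apply/exists_inP; apply: contraT => /exists_inPn H.
  have : \sum_(i in M) r <= \sum_i t i.
    rewrite [X in _ <= X](bigID (mem M)) /=; apply: (@leq_trans (\sum_(i in M) t i)); last exact: leq_addr.
    by apply: leq_sum => i iM; move: (H i iM); rewrite -leqNgt.
  rewrite sum_nat_const ts; lia.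
case=> i iM ti.
exists (fun j => if j == i then (t i).+1 else t j); split.
- by move=> j /=; case: eqP => _; [exact: ti| exact: tr].
- move=> j jM /=; case: eqP => [e|_]; last exact: tM.
  by rewrite e iM in jM.
- rewrite (bigD1 i) //= eqxx (eq_bigr t); last by move=> j /negbTE ->.
  by rewrite -ts [in RHS](bigD1 i) //= addSn.
Qed.

Lemma choose_M s (a : 'I_s -> nat) R :
  R.+1 <= s -> R < \sum_i a i ->
  exists M : {set 'I_s}, #|M| = s - R.+1 /\ R < \sum_(i in ~:M) a i.
Proof.
move=> hs ha.
pose P := [set i | a i != 0].
suff [N [cN sN]] : exists N : {set 'I_s}, #|N| = R.+1 /\ R < \sum_(i in N) a i.
  exists (~: N); split; first by rewrite cardsCs setCK card_ord cN.
  by rewrite setCK.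
case: (leqP R.+1 #|P|) => hP.
  have [N [sNP cN]] := ex_subset hP.
  exists N; split => //.
  apply: (@leq_trans (\sum_(i in N) 1)); first by rewrite sum1_card cN.
  apply: leq_sum => i iN; have := subsetP sNP i iN; rewrite inE; lia.
have hQ : R.+1 - #|P| <= #|~: P| by rewrite cardsCs card_ord; lia.
have [Q [sQP cQ]] := ex_subset hQ.
exists (P :|: Q); split.
  rewrite cardsU cQ.
  suff -> : P :&: Q = set0 by rewrite cards0 subn0 subnKC // ltnW.
  apply/setP => i; rewrite !inE; apply/negP => /andP [iP iQ].
  by have := subsetP sQP i iQ; rewrite !inE iP.
apply: (leq_trans ha); rewrite [X in X <= _](bigID (mem (P :|: Q))) /= [X in _ + X]big1 ?addn0 //.
move=> i; rewrite !inE negb_or => /andP [] /negPn /eqP -> //.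
Qed.

End Aux.

Section Mat.
Import GRing.Theory.
Variable F : finFieldType.
Local Open Scope ring_scope.

Lemma rw_leP r (y : 'rV[F]_r) k :
  reflect (forall j : 'I_r, (k <= j)%N -> y 0 j = 0) (nrt_row_weight y <= k)%N.
Proof.
apply: (iffP idP) => [/bigmax_leqP H j kj | H].
- apply/eqP; apply: contraT => nz; have := H j nz; lia.
- apply/bigmax_leqP => j nz; rewrite ltnNge; apply/negP => kj; by rewrite H ?eqxx in nz.
Qed.

Lemma rw_ge r (y : 'rV[F]_r) (j : 'I_r) : y 0 j != 0 -> (j.+1 <= nrt_row_weight y)%N.
Proof. move=> nz; rewrite /nrt_row_weight; exact: (@leq_bigmax_cond _ (fun j : 'I_r => y 0 j != 0) (fun j : 'I_r => j.+1) j nz). Qed.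

Lemma rw_zero r (y : 'rV[F]_r) (j : 'I_r) : (nrt_row_weight y <= j)%N -> y 0 j = 0.
Proof. by move/rw_leP; apply. Qed.

Lemma rw_add r (y y' : 'rV[F]_r) :
  (nrt_row_weight (y + y') <= nrt_row_weight y + nrt_row_weight y')%N.
Proof.
apply/rw_leP => j hj; rewrite mxE !rw_zero ?addr0 //; lia.
Qed.

Lemma rw_opp r (y : 'rV[F]_r) : nrt_row_weight (- y) = nrt_row_weight y.
Proof.
apply/eqP; rewrite eqn_leq; apply/andP; split; apply/rw_leP => j hj.
- by rewrite mxE rw_zero ?oppr0.
- by rewrite -[y]opprK mxE rw_zero ?oppr0.
Qed.

Lemma w_add s r (A B : 'M[F]_(s, r)) :
  (nrt_weight (A + B) <= nrt_weight A + nrt_weight B)%N.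
Proof.
rewrite /nrt_weight -big_split; apply: leq_sum => i _; rewrite linearD; exact: rw_add.
Qed.

Lemma w_opp s r (A : 'M[F]_(s, r)) : nrt_weight (- A) = nrt_weight A.
Proof. by apply: eq_bigr => i _; rewrite linearN rw_opp. Qed.

Lemma main_c s r R (x : 'M[F]_(s, r)) :
  (0 < R)%N -> (R <= r * (s - R.+1))%N -> (R < nrt_weight x)%N ->
  exists c, (2 * R < nrt_weight c)%N /\ (nrt_weight (x - c) <= R)%N.
Proof.
move=> hR hle hx.
have hs : (R.+1 <= s)%N.
  case: (leqP R.+1 s) => // /ltnW; rewrite -subn_eq0 => /eqP e.
  by move: hle; rewrite e muln0; lia.
pose a i := nrt_row_weight (row i x).
have [M [cM hM]] := @choose_M s a R hs hx.
have hd : (R <= #|M| * r)%N by rewrite cM mulnC.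
have [t [tr tM ts]] := @distribute s r M R hd.
pose z : 'M[F]_(s, r) := \matrix_(i, j) (if (a i < t i)%N && (j.+1 == t i) then 1 else 0 : F).
exists (x + z); split.
- have rowc i : (maxn (a i) (t i) <= nrt_row_weight (row i (x + z)))%N.
    case: (ltnP (a i) (t i)) => hat.
    + have jr : ((t i).-1 < r)%N by have := tr i; lia.
      pose j := Ordinal jr.
      have x0 : x i j = 0.
        have := @rw_zero r (row i x) j; rewrite mxE; apply => /=; rewrite -/(a i); lia.
      have := @rw_ge r (row i (x + z)) j; rewrite !mxE x0 add0r hat /=.
      have -> : (((t i).-1).+1 == t i) by apply/eqP; lia.
      move=> /(_ (oner_neq0 _)) /=; lia.
    + have -> : row i (x + z) = row i x by apply/rowP => j; rewrite !mxE ltnNge hat /= addr0.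
      by [].
  have hsum : (\sum_i maxn (a i) (t i) <= \sum_i nrt_row_weight (row i (x + z)))%N.
    by apply: leq_sum => i _; exact: rowc.
  rewrite /nrt_weight; apply: (leq_trans _ hsum).
  rewrite (bigID (mem M)) /=.
  have e1 : (\sum_(i | i \in M) t i)%N = R.
    rewrite -ts [in RHS](bigID (mem M)) /= [X in _ = _ + X]big1.
      by rewrite addr0.
    by move=> i /tM.
  have e2 : (\sum_(i | i \in M) t i <= \sum_(i | i \in M) maxn (a i) (t i))%N.
    by apply: leq_sum => i _; exact: leq_maxr.
  have e3 : (\sum_(i in ~: M) a i <= \sum_(i | i \notin M) maxn (a i) (t i))%N.
    rewrite (eq_bigl (fun i => i \notin M)); last by move=> i; rewrite inE.
    by apply: leq_sum => i _; exact: leq_maxl.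
  apply: (@leq_trans (R + R.+1)%N); first by lia.
  apply: leq_add; first by rewrite -[X in (X <= _)%N]e1.
  exact: leq_trans hM e3.
- rewrite opprD addrA subrr add0r w_opp.
  rewrite -ts; apply: leq_sum => i _; apply/rw_leP => j hj.
  rewrite !mxE; case: andP => // [[_ /eqP e]]; lia.
Qed.

End Mat.

Theorem mainTheorem6 (F : finFieldType) (s r R : nat)
  (hs : (0 < s)%N) (hr : (0 < r)%N) (hR : (0 < R)%N)
  (hdelta : ((r + 1) * (R + 1) <= s * r + 1)%N) :
  R_closed R (nrt_ball (0 : 'M[F]_(s, r)) R).
Proof.
have hle : (R <= r * (s - R.+1))%N.
  case: (leqP R.+1 s) => h.
    rewrite mulnBr; move: hdelta; rewrite mulnC [s * r]mulnC; nia.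
  nia.
exists [set c : 'M[F]_(s, r) | (2 * R < nrt_weight c)%N].
apply/setP => x; rewrite inE; apply/idP/idP.
- rewrite inE /nrt_dist subr0 -ltnNge => hx.
  have [c [hc hxc]] := main_c hR hle hx.
  by apply/bigcupP; exists c; rewrite !inE.
- case/bigcupP => c; rewrite !inE /nrt_dist subr0 => hc hxc; rewrite -ltnNge.
  apply: contraTT hc; rewrite -!leqNgt => hx.
  have := w_add x (c - x); rewrite addrC subrK -opprB w_opp => h.
  by apply: (leq_trans h); rewrite mul2n -addnn; exact: leq_add hx hxc.
Qed.
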